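(* For any $\delta>0$ and $s\in\mathbb{N}$ there is $C>0$ such that for any $m,n$ with $n\ge s$ and any $\mathcal{F}\subset[m]^n$ with $\mu(\mathcal{F})\ge e^{-n/C}$, if $\mathbf{S}\in\binom{[n]}{s}$ and $\mathbf{x}\in[m]^{\mathbf{S}}$ are uniformly random, then $\Pr[\mu(\mathcal{F}_{\mathbf{S}\to\mathbf{x}})\ge(1-\delta)\mu(\mathcal{F})]\ge1-\delta$.
   Context: $\mu$ denotes the uniform probability measure on the relevant product space $[m]^I$. For $S\subset[n]$ and $x\in[m]^S$, $\mathcal{F}_{S\to x}=\{z\in[m]^{[n]\setminus S}:(z_S=x, z_{[n]\setminus S}=z)\in\mathcal{F}\}\subset[m]^{[n]\setminus S}$. *)

(* Defs.v *)
From HB Require Import structures.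
From mathcomp Require Import all_boot all_order all_algebra.
From mathcomp Require Import reals sequences exp.
Set Implicit Arguments. Unset Strict Implicit. Unset Printing Implicit Defensive.
Import Order.TTheory GRing.Theory Num.Theory.
Local Open Scope ring_scope.

Definition mu (R : realType) (T : finType) (A : {set T}) : R :=
  #|A|%:R / #|T|%:R.

Section Restr.
Variables (m n : nat) (S : {set 'I_n}).

Definition onS := {ffun {i : 'I_n | i \in S} -> 'I_m}.
Definition offS := {ffun {i : 'I_n | i \notin S} -> 'I_m}.

(* the point of [m]^n with z_S = x and z_{[n]\S} = z *)
Definition glue (x : onS) (z : offS) : {ffun 'I_n -> 'I_m} :=
  [ffun i => (if i \in S as b return (i \in S) = b -> 'I_m
              then fun h => x (exist _ i h)
              else fun h => z (exist _ i (negbT h))) erefl].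

Definition restr (F : {set {ffun 'I_n -> 'I_m}}) (x : onS) : {set offS} :=
  [set z : offS | glue x z \in F].
End Restr.

Definition prob_good (R : realType) (delta : R) (s m n : nat)
    (F : {set {ffun 'I_n -> 'I_m}}) : R :=
  (\sum_(S in [set S : {set 'I_n} | #|S| == s])
      mu R [set x : onS m S | (1 - delta) * mu R F <= mu R (restr F x)])
  / #|[set S : {set 'I_n} | #|S| == s]|%:R.

(* Main.v *)
Require Import Defs.
From HB Require Import structures.
From mathcomp Require Import all_boot all_order all_algebra.
From mathcomp Require Import reals sequences exp.
From mathcomp Require Import ring lra zify.
Set Implicit Arguments. Unset Strict Implicit. Unset Printing Implicit Defensive.
Import Order.TTheory GRing.Theory Num.Theory.
Local Open Scope ring_scope.


Lemma dif_true (b : bool) T (f : b = true -> T) (g : b = false -> T) (h : b = true) :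
  (if b as c return (b = c -> T) then f else g) (erefl b) = f h.
Proof. by destruct b => //; congr f; apply: eq_irrelevance. Qed.
Lemma dif_false (b : bool) T (f : b = true -> T) (g : b = false -> T) (h : b = false) :
  (if b as c return (b = c -> T) then f else g) (erefl b) = g h.
Proof. by destruct b => //; congr g; apply: eq_irrelevance. Qed.

Section Glue.
Variables (m n : nat) (S : {set 'I_n}).
Local Notation Om := {ffun 'I_n -> 'I_m}.

Definition projS (w : Om) : onS m S := [ffun i => w (val i)].
Definition projC (w : Om) : offS m S := [ffun i => w (val i)].

Lemma glue_in (x : onS m S) (z : offS m S) i (h : i \in S) : glue x z i = x (exist _ i h).
Proof. by rewrite ffunE (dif_true _ _ h). Qed.
Lemma glue_out (x : onS m S) (z : offS m S) i (h : i \notin S) : glue x z i = z (exist _ i h).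
Proof.
rewrite ffunE (dif_false _ _ (negbTE h)); congr (z _); exact: val_inj.
Qed.

Lemma projS_glue x z : projS (glue x z) = x.
Proof. apply/ffunP => -[i h]; rewrite ffunE /= (glue_in _ _ h); congr (x _); exact: val_inj. Qed.
Lemma projC_glue x z : projC (glue x z) = z.
Proof. apply/ffunP => -[i h]; rewrite ffunE /= (glue_out _ _ h); congr (z _); exact: val_inj. Qed.
Lemma glue_proj w : glue (projS w) (projC w) = w.
Proof.
apply/ffunP => i; case: (boolP (i \in S)) => h.
  by rewrite (glue_in _ _ h) ffunE.
by rewrite (glue_out _ _ h) ffunE.
Qed.
End Glue.

Lemma cardR (R : numDomainType) (T : finType) (P : pred T) (A : {set T}) :
  #|[set a in A | P a]|%:R = \sum_(a in A) (P a)%:R :> R.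
Proof.
rewrite [RHS](bigID P) /= [X in _ + X]big1 ?addr0; last by move=> i /andP[_ /negbTE ->].
rewrite (eq_bigr (fun _ => 1)); last by move=> i /andP[_ ->].
rewrite sumr_const; congr (_ *+ _); apply: eq_card => a; by rewrite !inE.
Qed.

Section Fam.
Variables (R : realType) (m n : nat) (F : {set {ffun 'I_n -> 'I_m}}).
Local Notation Om := {ffun 'I_n -> 'I_m}.

Definition agree (S : {set 'I_n}) (w w' : Om) : bool := [forall i in S, w i == w' i].

Lemma agreeE S w w' : agree S w w' = (projS S w == projS S w').
Proof.
apply/idP/eqP => [/forall_inP h | e].
  by apply/ffunP => -[i hi]; rewrite !ffunE /=; apply/eqP/h.
apply/forall_inP => i hi.
by have := congr1 (fun f : onS m S => f (exist _ i hi)) e; rewrite !ffunE /= => ->.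
Qed.

Definition cls S w := [set w' in F | agree S w w'].

Lemma card_fiber S (x : onS m S) : #|[set w in F | projS S w == x]| = #|restr F x|.
Proof.
rewrite -(card_imset _ (@can_inj _ _ (glue x) (projC S) (projC_glue x))).
apply: eq_card => w; rewrite inE; apply/andP/imsetP.
  move=> [wF /eqP e]; exists (projC S w); last by rewrite -e glue_proj.
  by rewrite inE -e glue_proj.
by move=> [z zin ->]; rewrite inE in zin; rewrite zin projS_glue.
Qed.

Lemma card_cls S w : #|cls S w| = #|restr F (projS S w)|.
Proof.
rewrite -card_fiber; apply: eq_card => w'; rewrite !inE agreeE eq_sym.
by [].
Qed.

Lemma sum_fiber S (g : onS m S -> R) :
  \sum_(w in F) g (projS S w) = \sum_(x : onS m S) #|restr F x|%:R * g x.
Proof.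
rewrite (partition_big (projS S) predT) //=; apply: eq_bigr => x _.
rewrite (eq_bigr (fun _ => g x)); last by move=> w /andP[_ /eqP ->].
rewrite sumr_const -card_fiber mulr_natl; congr (_ *+ _).
by apply: eq_card => w; rewrite !inE.
Qed.

Lemma agree_refl S w : agree S w w. Proof. by rewrite agreeE. Qed.

Lemma count_key A B :
  \sum_(w in F) (#|cls A w| * #|cls B w|)%:R / #|cls (A :|: B) w|%:R <= #|F|%:R ^+ 2 :> R.
Proof.
have key a b : \sum_(w in F) ((agree A w a && agree B w b)%:R / #|cls (A :|: B) w|%:R) <= 1 :> R.
  rewrite (bigID (fun w => agree A w a && agree B w b)) /=.
  rewrite [X in _ + X]big1 ?addr0; last by move=> w /andP[_ /negbTE ->]; rewrite mul0r.
  set E := [set w in F | agree A w a && agree B w b].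
  have [E0 | [w0 w0E]] := set_0Vmem E.
    rewrite big1 //; move=> w /andP[wF c].
    have : w \in E by rewrite inE wF c.
    by rewrite E0 inE.
  have hw w : w \in E -> cls (A :|: B) w = cls (A :|: B) w0.
    move=> wE; have ag : agree (A :|: B) w w0.
      move: wE w0E; rewrite !inE => /andP[_ /andP[/forall_inP h1 /forall_inP h2]].
      move=> /andP[_ /andP[/forall_inP h3 /forall_inP h4]].
      apply/forall_inP => i; rewrite inE => /orP[iA|iB].
        by rewrite (eqP (h1 i iA)) (eqP (h3 i iA)).
      by rewrite (eqP (h2 i iB)) (eqP (h4 i iB)).
    apply/setP => w'; rewrite !inE !agreeE; rewrite agreeE in ag.
    by rewrite (eqP ag).
  rewrite (eq_bigr (fun _ => 1 / #|cls (A :|: B) w0|%:R)); last first.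
    by move=> w /andP[wF c]; rewrite c hw // inE wF c.
  rewrite sumr_const.
  have N0 : (0 < #|cls (A :|: B) w0|)%N.
    by apply/card_gt0P; exists w0; rewrite inE agree_refl andbT; move: w0E; rewrite inE => /andP[].
  have sub : (#|[pred w | (w \in F) && (agree A w a && agree B w b)]| <= #|cls (A :|: B) w0|)%N.
    apply: subset_leq_card; apply/subsetP => w; rewrite inE => /andP[wF c].
    by rewrite -(hw w); [rewrite inE wF agree_refl | rewrite inE wF c].
  rewrite div1r -[_ *+ _]mulr_natl ler_pdivrMr ?ltr0n // mul1r ler_nat.
  exact: sub.
apply: (@le_trans _ _ (\sum_(a in F) \sum_(b in F) (1 : R))); last first.
  by rewrite sumr_const sumr_const -mulr_natl mulr1 expr2 mulr_natl.
apply: (@le_trans _ _ (\sum_(a in F) \sum_(b in F) \sum_(w in F)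
   ((agree A w a && agree B w b)%:R / #|cls (A :|: B) w|%:R))); last first.
  by apply: ler_sum => a _; apply: ler_sum => b _; apply: key.
rewrite le_eqVlt; apply/orP; left; apply/eqP.
rewrite (eq_bigr (fun w => \sum_(a in F) \sum_(b in F)
   ((agree A w a && agree B w b)%:R / #|cls (A :|: B) w|%:R))); last first.
  move=> w _; rewrite natrM /cls !cardR big_distrlr /= mulr_suml.
  apply: eq_bigr => a _; rewrite mulr_suml; apply: eq_bigr => b _.
  by rewrite -natrM mulnb.
rewrite exchange_big /=; apply: eq_bigr => a _.
by rewrite exchange_big.
Qed.
End Fam.


Lemma ln_le_sub1 (R : realType) (x : R) : 0 < x -> ln x <= x - 1.
Proof.
move=> x0; have := @le_ln1Dx R (x - 1); rewrite addrCA subrr addr0; apply.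
by rewrite ltrBrDl addrN.
Qed.

Lemma ln3 (R : realType) (x y z : R) : 0 < x -> 0 < y -> 0 < z ->
  ln x + ln y - ln z <= x * y / z - 1.
Proof.
move=> x0 y0 z0; rewrite -lnM ?posrE // -ln_div ?posrE ?mulr_gt0 //.
by apply: ln_le_sub1; rewrite divr_gt0 ?mulr_gt0.
Qed.

Lemma card_onS m n (S : {set 'I_n}) : #|onS m S| = (m ^ #|S|)%N.
Proof. by rewrite card_ffun card_ord card_sig; apply: congr1; apply: eq_card. Qed.
Lemma card_offS m n (S : {set 'I_n}) : #|offS m S| = (m ^ (n - #|S|))%N.
Proof.
rewrite card_ffun card_ord card_sig; apply: congr1.
have e := cardsC S; rewrite card_ord in e.
have -> : #|[pred x | x \notin S]| = #|~: S| by apply: eq_card => i; rewrite !inE.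
lia.
Qed.

Section Ent.
Variables (R : realType) (m n : nat) (F : {set {ffun 'I_n -> 'I_m}}).
Hypothesis HF : (0 < #|F|)%N.
Local Notation Om := {ffun 'I_n -> 'I_m}.
Local Notation cls := (cls F).

Definition L S : R := \sum_(w in F) ln (#|cls S w|%:R * (m ^ #|S|)%:R / #|F|%:R).

Lemma mpos (S : {set 'I_n}) : (0 < m ^ #|S|)%N.
Proof.
rewrite expn_gt0; case: m F HF => [|m'] F' HF' //=.
case: (set_0Vmem S) => [->|[i iS]]; first by rewrite cards0.
by case/card_gt0P: HF' => w _; case: (w i).
Qed.

Lemma cls_pos S w : w \in F -> (0 < #|cls S w|)%N.
Proof. by move=> wF; apply/card_gt0P; exists w; rewrite inE wF agree_refl. Qed.

Lemma superadd (A B : {set 'I_n}) : [disjoint A & B] -> L A + L B <= L (A :|: B).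
Proof.
move=> dAB.
have cU : #|A :|: B| = (#|A| + #|B|)%N.
  by rewrite cardsU (disjoint_setI0 dAB) cards0 subn0.
rewrite -subr_le0 /L -big_split -sumrB /=.
have f0 : (0 : R) < #|F|%:R by rewrite ltr0n.
apply: (@le_trans _ _ (\sum_(w in F) ((#|cls A w| * #|cls B w|)%:R / #|cls (A :|: B) w|%:R / #|F|%:R - 1))).
  apply: ler_sum => w wF.
  have a0 := cls_pos A wF; have b0 := cls_pos B wF; have c0 := cls_pos (A :|: B) wF.
  have mA := mpos A; have mB := mpos B.
  apply: le_trans (ln3 _ _ _) _; rewrite ?mulr_gt0 ?divr_gt0 ?invr_gt0 ?ltr0n ?mpos //.
  rewrite le_eqVlt; apply/orP; left; apply/eqP; congr (_ - 1).
  rewrite cU expnD !natrM; field.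
  by rewrite !pnatr_eq0 -!lt0n c0 mA mB HF.
rewrite big_split sumrN sumr_const /= -mulr_suml subr_le0.
rewrite ler_pdivrMr // -expr2 -mulr_natl mulr1; exact: count_key.
Qed.
End Ent.


Lemma binmul n a b : (a + b <= n)%N ->
  ('C(n, a) * 'C(n - a, b) = 'C(n, a + b) * 'C(a + b, a))%N.
Proof.
move=> h.
have ha : (a <= n)%N by lia.
have hb : (b <= n - a)%N by lia.
have E1 := bin_fact ha; have E2 := bin_fact hb.
have E3 := bin_fact h; have E4 := bin_fact (leq_addr b a).
rewrite addKn in E4.
have K0 : (0 < a`! * b`! * (n - (a + b))`!)%N by rewrite !muln_gt0 !fact_gt0.
apply/eqP; rewrite -(eqn_pmul2r K0); apply/eqP.
have -> : ('C(n, a) * 'C(n - a, b) * (a`! * b`! * (n - (a + b))`!) =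
   'C(n, a) * (a`! * ('C(n - a, b) * (b`! * (n - a - b)`!))))%N.
  rewrite subnDA; ring.
rewrite E2 E1 -E3 -E4; ring.
Qed.

Section Avg.
Variables (R : realType) (n : nat) (L : {set 'I_n} -> R).
Hypothesis L0 : forall S, 0 <= L S.
Hypothesis Lsup : forall A B : {set 'I_n}, [disjoint A & B] -> L A + L B <= L (A :|: B).

Definition Ks k := [set S : {set 'I_n} | #|S| == k].
Definition Asum k := \sum_(S in Ks k) L S.
Definition D (S : {set 'I_n}) t := [set T : {set 'I_n} | [disjoint S & T] & #|T| == t].

Lemma cardC_n (S : {set 'I_n}) : #|~: S| = (n - #|S|)%N.
Proof. have e := cardsC S; rewrite card_ord in e; lia. Qed.

Lemma count_disj (S : {set 'I_n}) t : #|D S t| = 'C(n - #|S|, t).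
Proof.
rewrite -cardC_n -cards_draws; apply: eq_card => T.
by rewrite !inE disjoint_sym disjoints_subset.
Qed.

Lemma H2 s t : \sum_(S in Ks s) \sum_(T in D S t) L S = 'C(n - s, t)%:R * Asum s.
Proof.
rewrite /Asum mulr_sumr; apply: eq_bigr => S; rewrite inE => /eqP Ss.
by rewrite sumr_const count_disj Ss mulr_natl.
Qed.

Lemma H3 s t : \sum_(S in Ks s) \sum_(T in D S t) L T = 'C(n - t, s)%:R * Asum t.
Proof.
rewrite (exchange_big_dep (mem (Ks t))) /=; last first.
  by move=> S T _; rewrite !inE => /andP[_ ->].
rewrite /Asum mulr_sumr; apply: eq_bigr => T; rewrite inE => /eqP Tt.
rewrite (eq_bigl (mem (D T s))); first by rewrite sumr_const count_disj Tt mulr_natl.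
by move=> S; rewrite !inE Tt eqxx andbT disjoint_sym andbC.
Qed.

Lemma H4 s t : \sum_(S in Ks s) \sum_(T in D S t) L (S :|: T) = 'C(s + t, s)%:R * Asum (s + t)%N.
Proof.
have inner (S : {set 'I_n}) : #|S| = s -> \sum_(T in D S t) L (S :|: T) =
    \sum_(U in Ks (s + t)%N | S \subset U) L U.
  move=> Ss.
  rewrite [RHS](reindex_onto (setU S) (fun U => U :\: S)) /=; last first.
    move=> U /andP[_ SU]; apply/setP => x; rewrite !inE.
    by case xS: (x \in S) => //=; rewrite (subsetP SU).
  apply: eq_bigl => T; rewrite !inE subsetUl andbT.
  have -> : (S :|: T) :\: S = T :\: S.
    by apply/setP => x; rewrite !inE; case: (x \in S).
  case dST: [disjoint S & T].
    have -> : T :\: S = T by apply/setDidPl; rewrite disjoint_sym.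
    by rewrite eqxx andbT cardsU (disjoint_setI0 dST) cards0 subn0 Ss eqn_add2l.
  rewrite /=; apply/esym/negbTE/negP => /andP[_ /eqP e].
  move/negbT: dST => /negP; apply; rewrite disjoint_sym -e.
  by rewrite disjoints_subset; apply/subsetP => x; rewrite !inE => /andP[].
transitivity (\sum_(S in Ks s) \sum_(U in Ks (s + t)%N | S \subset U) L U).
  by apply: eq_bigr => S; rewrite inE => /eqP Ss; apply: inner.
rewrite (exchange_big_dep (mem (Ks (s + t)%N))) /=; last first.
  by move=> S U _ /andP[].
rewrite /Asum mulr_sumr; apply: eq_bigr => U; rewrite inE => /eqP Us.
rewrite (eq_bigl (mem [set S : {set 'I_n} | S \subset U & #|S| == s])).
  by rewrite sumr_const cards_draws Us mulr_natl.
by move=> S; rewrite !inE Us eqxx /= andbC.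
Qed.

Definition bb k := Asum k / 'C(n, k)%:R.

Lemma Asum_ge0 k : 0 <= Asum k.
Proof. by apply: sumr_ge0 => S _; apply: L0. Qed.

Lemma bb_ge0 k : 0 <= bb k.
Proof. by rewrite /bb divr_ge0 ?Asum_ge0 ?ler0n. Qed.

Lemma step s t : (s + t <= n)%N -> bb s + bb t <= bb (s + t)%N.
Proof.
move=> h.
have main : 'C(n - s, t)%:R * Asum s + 'C(n - t, s)%:R * Asum t <=
    'C(s + t, s)%:R * Asum (s + t)%N.
  rewrite -H2 -H3 -H4 -big_split /=; apply: ler_sum => S _.
  rewrite -big_split /=; apply: ler_sum => T; rewrite inE => /andP[d _].
  exact: Lsup.
have hs : (s <= n)%N by lia.
have ht : (t <= n)%N by lia.
have hst : (s <= s + t)%N by lia.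
have hts : (t + s <= n)%N by lia.
have M1 := binmul h.
set M := ('C(n, s) * 'C(n - s, t))%N.
have M2 : ('C(n, t) * 'C(n - t, s) = M)%N.
  rewrite (binmul hts) /M M1 [(t + s)%N]addnC; congr (_ * _)%N.
  by have := bin_sub (leq_addr t s); rewrite addKn.
have Mpos : (0 < M)%N by rewrite muln_gt0 !bin_gt0 hs; lia.
have c1 : (0 < 'C(n, s))%N by rewrite bin_gt0.
have c2 : (0 < 'C(n - s, t))%N by rewrite bin_gt0; lia.
have c3 : (0 < 'C(n, t))%N by rewrite bin_gt0.
have c4 : (0 < 'C(n - t, s))%N by rewrite bin_gt0; lia.
have c5 : (0 < 'C(n, s + t))%N by rewrite bin_gt0.
have c6 : (0 < 'C(s + t, s))%N by rewrite bin_gt0.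
have eq1 : bb s = 'C(n - s, t)%:R * Asum s / M%:R.
  rewrite /bb /M natrM; field.
  by rewrite !pnatr_eq0 -!lt0n c1 c2.
have eq2 : bb t = 'C(n - t, s)%:R * Asum t / M%:R.
  rewrite /bb -M2 natrM; field.
  by rewrite !pnatr_eq0 -!lt0n c3 c4.
have eq3 : bb (s + t)%N = 'C(s + t, s)%:R * Asum (s + t)%N / M%:R.
  rewrite /bb /M M1 natrM; field.
  by rewrite !pnatr_eq0 -!lt0n c5 c6.
by rewrite eq1 eq2 eq3 -mulrDl ler_pM2r ?invr_gt0 ?ltr0n.
Qed.

Lemma bb_n : bb n = L setT.
Proof.
rewrite /bb binn divr1 /Asum (big_pred1 setT) // => S.
rewrite !inE; apply/eqP/eqP => [e | ->]; last by rewrite cardsT card_ord.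
apply/eqP; rewrite eqEcard subsetT cardsT card_ord e leqnn.
by [].
Qed.

Lemma chain k s : (k * s <= n)%N -> k%:R * bb s <= bb (k * s)%N.
Proof.
elim: k => [|k IH] h; first by rewrite mul0r; apply: bb_ge0.
have h1 : (k * s + s <= n)%N by rewrite mulSn addnC in h.
have -> : (k.+1 * s = k * s + s)%N by rewrite mulSn addnC.
rewrite -addn1 natrD mulrDl mul1r.
apply: le_trans (step h1); rewrite lerD2r; apply: IH; lia.
Qed.

Lemma bb_le_n k : (k <= n)%N -> bb k <= bb n.
Proof.
move=> h; have h1 : (k + (n - k) <= n)%N by lia.
have := step h1; rewrite subnKC // => H; apply: le_trans H.
by rewrite lerDl bb_ge0.
Qed.

Lemma avg_bound s : (0 < s)%N -> (s <= n)%N -> bb s * n%:R <= 2 * s%:R * L setT.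
Proof.
move=> s0 sn; set k := (n %/ s)%N.
have k1 : (k * s <= n)%N by apply: leq_divM.
have k2 : (n < k.+1 * s)%N by apply: ltn_ceil.
have k0 : (0 < k)%N by rewrite divn_gt0.
have nk : (n <= 2 * (k * s))%N by nia.
apply: (@le_trans _ _ (bb s * (2 * (k * s))%:R)).
  by apply: ler_wpM2l; [apply: bb_ge0 | rewrite ler_nat].
have -> : bb s * (2 * (k * s))%:R = 2 * s%:R * (k%:R * bb s) by rewrite !natrM; ring.
rewrite ler_pM2l ?mulr_gt0 ?ltr0n // -bb_n.
exact: le_trans (chain k1) (bb_le_n k1).
Qed.
End Avg.


Lemma ln_cmp (R : realType) (r t : R) : 0 < r -> 0 < t -> r * ln t + r - t <= r * ln r.
Proof.
move=> r0 t0.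
have h : ln t - ln r <= t / r - 1.
  by rewrite -ln_div ?posrE //; apply: ln_le_sub1; rewrite divr_gt0.
have := h; rewrite -(ler_pM2l r0) mulrBr mulrBr mulr1 mulrCA divff ?gt_eqF // mulr1.
lra.
Qed.

Lemma phi_ge0 (R : realType) (r : R) : 0 <= r -> 0 <= r * ln r - r + 1.
Proof.
rewrite le_eqVlt => /orP[/eqP <-|r0]; first by rewrite mul0r subr0 add0r.
have := ln_cmp r0 ltr01; rewrite ln1 mulr0 add0r; lra.
Qed.

Lemma phi_bad (R : realType) (d r : R) : 0 < d < 1 -> 0 <= r <= 1 - d ->
  d ^+ 2 / 4 <= r * ln r - r + 1.
Proof.
move=> /andP[d0 d1] /andP[rge rle].
move: rge; rewrite le_eqVlt => /orP[/eqP <-|r0].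
  rewrite mul0r subr0 add0r ler_pdivrMr //; nra.
set t := 1 - d / 2.
have t0 : 0 < t by rewrite /t; lra.
have t1 : t <= 1 by rewrite /t; lra.
have lt0 : ln t <= 0 by apply: ln_le0.
have lt1 : 1 - t^-1 <= ln t.
  have ti : 0 < t^-1 by rewrite invr_gt0.
  have := ln_le_sub1 ti; rewrite lnV ?posrE //; lra.
have := ln_cmp r0 t0.
have e1 : r * ln t >= (1 - d) * ln t by rewrite ler_wnM2r.
have e2 : (1 - d) * ln t >= (1 - d) * (1 - t^-1) by rewrite ler_wpM2l //; lra.
have e3 : (1 - d) * t^-1 <= t - d ^+ 2 / 4.
  rewrite ler_pdivrMr // /t; nra.
rewrite /t in e3 *; lra.
Qed.

Section Link.
Variables (R : realType) (m n : nat) (F : {set {ffun 'I_n -> 'I_m}}).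
Hypothesis HF : (0 < #|F|)%N.
Implicit Types S : {set 'I_n}.

Local Notation f := (#|F|%:R : R).
Local Notation Mr S := ((m ^ #|S|)%:R : R).
Local Notation c x := (#|restr F x|%:R : R).
Definition rr S (x : onS m S) : R := c x * Mr S / f.

Lemma f_gt0 : 0 < f. Proof. by rewrite ltr0n. Qed.
Lemma M_gt0 S : 0 < Mr S. Proof. by rewrite ltr0n (mpos HF). Qed.

Lemma sum_all (T : finType) (g : R) : \sum_(x : T) g = g *+ #|T|.
Proof.
rewrite (eq_bigl (fun x => x \in [set: T])) ?sumr_const ?cardsT // => x.
by rewrite inE.
Qed.

Lemma sum_c S : \sum_(x : onS m S) c x = f.
Proof.
have := sum_fiber F (fun _ : onS m S => (1 : R)).
rewrite sumr_const => ->; by apply: eq_bigr => x _; rewrite mulr1.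
Qed.

Lemma L_fiber S : L R F S = \sum_(x : onS m S) c x * ln (rr x).
Proof.
rewrite /L (eq_bigr (fun w => ln (rr (projS S w)))); first exact: sum_fiber.
by move=> w _; rewrite /rr card_cls.
Qed.

Lemma rr_ge0 S (x : onS m S) : 0 <= rr x.
Proof. by rewrite /rr divr_ge0 ?mulr_ge0 ?ler0n. Qed.

Lemma L_phi S : L R F S = f / Mr S * \sum_(x : onS m S) (rr x * ln (rr x) - rr x + 1).
Proof.
have f0 := f_gt0; have M0 := M_gt0 S.
have s1 : \sum_(x : onS m S) rr x = Mr S.
  rewrite /rr -mulr_suml -mulr_suml sum_c; field; by rewrite gt_eqF.
have s2 : \sum_(x : onS m S) (1 : R) = Mr S by rewrite sum_all card_onS.
rewrite big_split /= sumrB s1 s2 subrK L_fiber mulr_sumr; apply: eq_bigr => x _.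
rewrite /rr; field; by rewrite !gt_eqF.
Qed.

Lemma L_ge0 S : 0 <= L R F S.
Proof.
rewrite L_phi mulr_ge0 ?divr_ge0 ?ler0n //.
by apply: sumr_ge0 => x _; apply: phi_ge0; apply: rr_ge0.
Qed.

Lemma mposk k : (k <= n)%N -> (0 < m ^ k)%N.
Proof.
move=> kn; rewrite expn_gt0; case: m F HF => [|m'] F' HF' //=.
case: n F' HF' kn => [|n'] F' HF' kn; first by move: kn; rewrite leqn0.
by case/card_gt0P: HF' => w _; case: (w ord0).
Qed.

Lemma muF_eq : mu R F = f / (m ^ n)%:R.
Proof. by rewrite /mu card_ffun !card_ord. Qed.

Lemma mu_restr S (x : onS m S) : mu R (restr F x) = rr x * mu R F.
Proof.
have sn : (#|S| <= n)%N by rewrite -[n in (_ <= n)%N](card_ord n) max_card.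
have h1 := mposk sn; have h2 := mposk (leq_subr #|S| n).
have e : (m ^ n = m ^ #|S| * m ^ (n - #|S|))%N by rewrite -expnD subnKC.
rewrite muF_eq /mu card_offS /rr e natrM.
have f0 := f_gt0.
field; by rewrite !pnatr_eq0 -!lt0n h1 h2 HF.
Qed.

Lemma muF_gt0 : 0 < mu R F.
Proof. by rewrite muF_eq divr_gt0 ?ltr0n ?mposk. Qed.

Lemma per_S (d : R) S : 0 < d < 1 ->
  1 - 4 / d ^+ 2 * (L R F S / f) <=
  mu R [set x : onS m S | (1 - d) * mu R F <= mu R (restr F x)].
Proof.
move=> dd; have d0 : 0 < d by case/andP: dd.
have f0 := f_gt0; have M0 := M_gt0 S.
set bad := [set x : onS m S | rr x < 1 - d].
have eset : [set x : onS m S | (1 - d) * mu R F <= mu R (restr F x)] = ~: bad.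
  apply/setP => x; rewrite !inE mu_restr ler_pM2r ?muF_gt0 //.
  by rewrite real_leNgt ?num_real.
have cardM : #|onS m S|%:R = Mr S :> R by rewrite card_onS.
have hb : (#|bad| <= #|onS m S|)%N by apply: max_card.
have cb : #|~: bad|%:R = Mr S - #|bad|%:R :> R.
  by rewrite cardsCs setCK natrB // card_onS.
have key : #|bad|%:R * (d ^+ 2 / 4) <= Mr S / f * L R F S.
  have e1 : Mr S / f * (f / Mr S) = 1 by field; rewrite ?gt_eqF.
  rewrite L_phi [in X in _ <= X]mulrA e1 mul1r.
  rewrite (bigID (mem bad)) /=.
  apply: (@le_trans _ _ (\sum_(x in bad) (rr x * ln (rr x) - rr x + 1))); last first.
    by rewrite lerDl; apply: sumr_ge0 => x _; apply: phi_ge0; apply: rr_ge0.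
  rewrite mulr_natl -sumr_const; apply: ler_sum => x; rewrite inE => xb.
  by apply: phi_bad => //; rewrite rr_ge0 ltW.
rewrite /mu eset cb cardM.
have dd2 : 0 < d ^+ 2 by rewrite exprn_gt0.
rewrite mulrBl divff ?gt_eqF // lerD2l lerN2.
rewrite ler_pdivrMr //.
move: key; rewrite -ler_pdivlMr ?divr_gt0 // => k; apply: le_trans k _.
rewrite le_eqVlt; apply/orP; left; apply/eqP; field.
by rewrite !gt_eqF.
Qed.
End Link.


Section Fin.
Variables (R : realType) (m n : nat) (F : {set {ffun 'I_n -> 'I_m}}).
Hypothesis HF : (0 < #|F|)%N.

Lemma L_setT : L R F setT = #|F|%:R * ln ((m ^ n)%:R / #|F|%:R).
Proof.
rewrite /L (eq_bigr (fun _ => ln ((m ^ n)%:R / #|F|%:R))).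
  by rewrite sumr_const [RHS]mulr_natl.
move=> w wF; have -> : cls F setT w = [set w].
  apply/setP => w'; rewrite !inE; apply/andP/eqP => [[_ /forall_inP h] | ->].
    by apply/ffunP => i; apply/esym/eqP/h; rewrite inE.
  by rewrite wF agree_refl.
by rewrite cards1 mul1r cardsT card_ord.
Qed.

Lemma L_set0 : L R F set0 = 0.
Proof.
rewrite /L big1 // => w wF; have -> : cls F set0 w = F.
  apply/setP => w'; rewrite !inE; case: (w' \in F) => //=.
  by apply/forall_inP => i; rewrite inE.
by rewrite cards0 expn0 mulr1 divff ?ln1 // pnatr_eq0 -lt0n.
Qed.
End Fin.

Lemma mu_ge0 (R : realType) (T : finType) (A : {set T}) : 0 <= mu R A.
Proof. by rewrite /mu divr_ge0 ?ler0n. Qed.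

Unset Implicit Arguments.
Theorem proposition6p1 (R : realType) (delta : R) (s : nat) :
  0 < delta ->
  exists C : R, 0 < C /\
    forall (m n : nat) (F : {set {ffun 'I_n -> 'I_m}}),
      (s <= n)%N ->
      expR (- (n%:R / C)) <= mu R F ->
      1 - delta <= prob_good delta s F.
Proof.
move=> d0.
have pg0 m n (F : {set {ffun 'I_n -> 'I_m}}) : 0 <= prob_good delta s F.
  by rewrite /prob_good divr_ge0 ?ler0n // sumr_ge0 // => S _; apply: mu_ge0.
case: (leP 1 delta) => d1.
  exists 1; split => // m n F _ _; apply: le_trans (pg0 _ _ F); lra.
have dd : 0 < delta < 1 by rewrite d0 d1.
exists (8 * (s.+1)%:R / delta ^+ 3); split.
  by rewrite divr_gt0 ?mulr_gt0 ?ltr0n ?exprn_gt0.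
move=> m n F sn H.
have muF : 0 < mu R F by apply: lt_le_trans H; rewrite expR_gt0.
have HF : (0 < #|F|)%N.
  by move: muF; rewrite /mu lt0n; apply: contraTneq => ->; rewrite mul0r ltxx.
have f0 : (0 : R) < #|F|%:R by rewrite ltr0n.
set c := 4 / delta ^+ 2.
have K0 : (0 < 'C(n, s))%N by rewrite bin_gt0.
have Kr : (0 : R) < 'C(n, s)%:R by rewrite ltr0n.
have lower : 1 - c / #|F|%:R * bb (L R F) s <= prob_good delta s F.
  rewrite /prob_good card_draws card_ord ler_pdivlMr //.
  apply: le_trans (ler_sum _ (fun S _ => per_S HF S dd)).
  rewrite sumrB sumr_const card_draws card_ord -mulr_sumr -mulr_suml /bb /Asum /Ks.
  rewrite le_eqVlt; apply/orP; left; apply/eqP.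
  rewrite /c; field; by rewrite !gt_eqF.
apply: le_trans lower; rewrite lerD2l lerN2.
have [s0 | spos] := posnP s.
  have A0 : Asum (L R F) s = 0.
    rewrite /Asum big1 // => S; rewrite inE s0 cards_eq0 => /eqP ->; exact: L_set0.
  by rewrite /bb A0 mul0r mulr0 ltW.
have npos : (0 < n)%N by lia.
set C := 8 * (s.+1)%:R / delta ^+ 3.
have C0 : 0 < C by rewrite divr_gt0 ?mulr_gt0 ?ltr0n ?exprn_gt0.
have hL : L R F setT <= #|F|%:R * (n%:R / C).
  rewrite L_setT // ler_wpM2l ?ler0n //.
  have e : (m ^ n)%:R / #|F|%:R = (mu R F)^-1 by rewrite muF_eq invf_div.
  rewrite e lnV ?posrE // lerNl.
  by move: H; rewrite -ler_ln ?posrE ?expR_gt0 // expRK.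
have hb := avg_bound (@L_ge0 R _ _ _ HF) (superadd R HF) spos sn.
have hb2 : bb (L R F) s <= 2 * s%:R * (#|F|%:R * (n%:R / C)) / n%:R.
  rewrite ler_pdivlMr ?ltr0n //; apply: le_trans hb _.
  by rewrite ler_wpM2l ?mulr_ge0 ?ler0n.
have c0 : 0 <= c / #|F|%:R by rewrite /c divr_ge0 ?divr_ge0 ?ler0n ?exprn_ge0 ?ltW.
apply: le_trans (ler_wpM2l c0 hb2) _.
have -> : c / #|F|%:R * (2 * s%:R * (#|F|%:R * (n%:R / C)) / n%:R) =
    delta * (s%:R / (s.+1)%:R).
  rewrite /c /C; field.
  have s1 : (0:R) < 1 + s%:R by rewrite ltr_pwDl ?ler0n.
  by rewrite !gt_eqF ?ltr0n.
rewrite ger_pMr // ler_pdivrMr ?ltr0n // mul1r ler_nat.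
by [].
Qed.
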